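(* Let $Y$ and $Z$ be random variables such that $Y$ has a continuous distribution function and $a(Z-b)$ is integer-valued for some real numbers $a>0$ and $b$. If $\sigma_Z^2:=\operatorname{Var}Z<\infty$, then $$d_{KS}(Y,Z)\ge\frac{1}{12a\sigma_Z+8}.$$
   Context: $d_{KS}(Y,Z):=\sup_{x\in\mathbb R}|P(Y\le x)-P(Z\le x)|$. *)

(* Defs.v *)
From HB Require Import structures.
From mathcomp Require Import all_boot all_order all_algebra.
From mathcomp Require Import all_classical all_reals all_analysis.
Set Implicit Arguments. Unset Strict Implicit. Unset Printing Implicit Defensive.
Import Order.TTheory GRing.Theory Num.Theory.
Import numFieldNormedType.Exports.
Local Open Scope classical_set_scope.
Local Open Scope ring_scope.

Definition distfun d (T : measurableType d) (R : realType) (P : probability T R)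
  (X : {RV P >-> R}) (x : R) : R := fine (cdf X x).

Definition dKS d1 d2 (T1 : measurableType d1) (T2 : measurableType d2)
  (R : realType) (P1 : probability T1 R) (P2 : probability T2 R)
  (Y : {RV P1 >-> R}) (Z : {RV P2 >-> R}) : R :=
  sup (range (fun x : R => `|distfun Y x - distfun Z x|)).

(* Main.v *)
Require Import Defs.
From HB Require Import structures.
From mathcomp Require Import all_boot all_order all_algebra.
From mathcomp Require Import all_classical all_reals all_analysis.
Import Order.TTheory GRing.Theory Num.Theory.
Import numFieldNormedType.Exports.
Local Open Scope classical_set_scope.
Local Open Scope ring_scope.
From mathcomp Require Import ring lra.

Lemma distfunE (R : realType) d (T : measurableType d) (P : probability T R)
  (X : {RV P >-> R}) x : distfun X x = fine (P [set w | X w <= x]).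
Proof.
rewrite /distfun /cdf /distribution /pushforward; congr (fine (P _)).
Qed.

Lemma mes_le (R : realType) d (T : measurableType d) (P : probability T R)
  (X : {RV P >-> R}) x : measurable [set w | X w <= x].
Proof.
have -> : [set w | X w <= x] = X @^-1` `]-oo, x].
  by apply/seteqP; split=> w /=; rewrite in_itv.
exact: measurable_funPTI.
Qed.

Lemma mes_eq (R : realType) d (T : measurableType d) (P : probability T R)
  (X : {RV P >-> R}) x : measurable [set w | X w = x].
Proof.
have -> : [set w | X w = x] = X @^-1` [set x] by [].
exact: measurable_funPTI.
Qed.

Lemma fineP01 (R : realType) d (T : measurableType d) (P : probability T R)
  (A : set T) : measurable A -> 0 <= fine (P A) <= 1.
Proof.
move=> mA; have h1 := probability_le1 P mA.
have h0 := measure_ge0 P A.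
have fA : P A \is a fin_num by rewrite fin_num_measure.
apply/andP; split; first exact: fine_ge0.
by rewrite -lee_fin fineK.
Qed.

Lemma distfun01 (R : realType) d (T : measurableType d) (P : probability T R)
  (X : {RV P >-> R}) x : 0 <= distfun X x <= 1.
Proof. by rewrite distfunE; apply: fineP01; apply: mes_le. Qed.

Lemma dKS_ub (R : realType)
  (d1 : measure_display) (T1 : measurableType d1) (P1 : probability T1 R)
  (d2 : measure_display) (T2 : measurableType d2) (P2 : probability T2 R)
  (Y : {RV P1 >-> R}) (Z : {RV P2 >-> R}) x :
  `|distfun Y x - distfun Z x| <= dKS Y Z.
Proof.
rewrite /dKS; apply: ub_le_sup; last by exists x.
exists 1 => _ [y _ <-].
have /andP[h1 h2] := (@distfun01 _ _ _ _ Y y); have /andP[h3 h4] := (@distfun01 _ _ _ _ Z y).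
rewrite ler_norml; apply/andP; split; lra.
Qed.

Lemma atom_le (R : realType)
  (d1 : measure_display) (T1 : measurableType d1) (P1 : probability T1 R)
  (d2 : measure_display) (T2 : measurableType d2) (P2 : probability T2 R)
  (Y : {RV P1 >-> R}) (Z : {RV P2 >-> R}) z :
  continuous (distfun Y) ->
  fine (P2 [set w | Z w = z]) <= 2 * dKS Y Z.
Proof.
move=> hY; apply/ler_addgt0Pr => e e0.
have := hY z; move/cvgrPdist_lt => /(_ e e0) /nbhs_ballP [h /= h0 hb].
set t := z - h / 2.
have ht : `|distfun Y z - distfun Y t| < e.
  apply: hb; rewrite -ball_normE /= /t opprB addrC subrK.
  rewrite ger0_norm; last by rewrite divr_ge0 // ltW.
  lra.
have tz : t <= z by rewrite /t; lra.
set A := [set w | Z w <= t]; set B := [set w | Z w = z]; set C := [set w | Z w <= z].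
have mA : measurable A by exact: mes_le.
have mB : measurable B by exact: mes_eq.
have mC : measurable C by exact: mes_le.
have dAB : A `&` B = set0.
  apply/seteqP; split=> w //= [] h1 h2.
  have : z <= t by rewrite -[z]h2.
  rewrite /t; lra.
have E : (P2 A + P2 B <= P2 C)%E.
  rewrite -measureU //; apply: le_measure; rewrite ?inE //; first exact: measurableU.
  by move=> w /= [] h1; [exact: le_trans h1 tz | rewrite /C /= h1].
have fA : P2 A \is a fin_num by rewrite fin_num_measure.
have fB : P2 B \is a fin_num by rewrite fin_num_measure.
have fC : P2 C \is a fin_num by rewrite fin_num_measure.
rewrite -(fineK fA) -(fineK fB) -(fineK fC) -EFinD lee_fin in E.
have u1 := @dKS_ub _ _ _ P1 _ _ P2 Y Z z; have u2 := @dKS_ub _ _ _ P1 _ _ P2 Y Z t.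
rewrite !(@distfunE _ _ _ P2 Z) -/A -/C in u1 u2.
move: ht u1 u2; rewrite ltr_norml !ler_norml => /andP[h1 h2] /andP[h3 h4] /andP[h5 h6].
lra.
Qed.

Theorem lemma5p5 (R : realType)
  (d1 : measure_display) (T1 : measurableType d1) (P1 : probability T1 R)
  (d2 : measure_display) (T2 : measurableType d2) (P2 : probability T2 R)
  (Y : {RV P1 >-> R}) (Z : {RV P2 >-> R}) (a b : R) :
  0 < a ->
  continuous (distfun Y) ->
  (forall w, exists k : int, a * (Z w - b) = k%:~R) ->
  (Z : T2 -> R) \in Lfun P2 2%:E ->
  dKS Y Z >= 1 / (12 * a * Num.sqrt (fine 'V_P2[Z]) + 8).
Proof.
move=> a0 hY hZ hL.
set δ := dKS Y Z.
have δ0 : 0 <= δ by apply: le_trans (@dKS_ub _ _ _ P1 _ _ P2 Y Z 0); exact: normr_ge0.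
set μ := fine 'E_P2[Z].
set v := fine 'V_P2[Z].
have hv : 'V_P2[Z] = v%:E by rewrite fineK // variance_fin_num.
have v0 : 0 <= v by apply: fine_ge0; exact: variance_ge0.
set σ := Num.sqrt v.
have σ0 : 0 <= σ by exact: sqrtr_ge0.
have σ2 : σ ^+ 2 = v by exact: sqr_sqrtr.
set N := (Num.truncn (4 * a * σ)).+2.
have hN1 : 4 * a * σ + 1 < N%:R.
  have := truncnS_gt (4 * a * σ); rewrite /N -addn1 natrD; lra.
have hN2 : N%:R <= 4 * a * σ + 2.
  have : (Num.truncn (4 * a * σ))%:R <= 4 * a * σ.
    by rewrite truncn_le; apply: mulr_ge0 => //; apply: mulr_ge0 => //; exact: ltW.
  rewrite /N -addn2 natrD; lra.
set t := N%:R / (2 * a).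
have t0 : 0 < t by rewrite /t divr_gt0 //; lra.
have tN : a * t * 2 = N%:R by rewrite /t; field; lra.
set L := a * (μ - b) - a * t.
set k0 : int := Num.floor L + 1.
pose atom (j : nat) := [set w | Z w = b + (k0 + j%:Z)%:~R / a].
set cheb := [set w | t <= `|Z w - μ|].
have mcheb : measurable cheb.
  have mf : measurable_fun setT (fun w => `|Z w - μ|).
    by apply: measurableT_comp => //; apply: measurable_realfun.measurable_funB.
  have := mf measurableT _ (measurable_itv `[t, +oo[).
  rewrite setTI; congr measurable; apply/seteqP; split=> w /=; rewrite in_itv /= andbT //.
have matom : forall j, measurable (atom j) by move=> j; exact: mes_eq.
have cover : [set: T2] `<=` cheb `|` \big[setU/set0]_(j < N) atom j.
  move=> w _; case: (leP t `|Z w - μ|) => [h|h]; [by left | right].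
  rewrite -bigcup_mkord.
  have [k hk] := hZ w.
  move: h; rewrite ltr_norml => /andP[h1 h2].
  have hk1 : L < k%:~R by rewrite -hk /L; nra.
  have hk2 : k%:~R < L + N%:R :> R by rewrite -hk /L; nra.
  have hk0 : L < k0%:~R by rewrite /k0; exact: floorD1_gt.
  have kk0 : k0 <= k.
    by rewrite /k0 lezD1 floor_lt_int.
  have kN : (k - k0 < N%:Z)%R.
    rewrite -(ltr_int R) rmorphB /=; lra.
  exists `|k - k0|%N.
    by rewrite /= -ltz_nat gez0_abs // subr_ge0.
  rewrite /atom /= gez0_abs ?subr_ge0 //.
  have -> : k0 + (k - k0) = k by rewrite addrC subrK.
  rewrite -hk; field; lra.
have mU : measurable (\big[setU/set0]_(j < N) atom j).
  by apply: bigsetU_measurable => j _.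
have E1 : (1 <= P2 cheb + \sum_(j < N) P2 (atom j))%E.
  rewrite -(probability_setT P2).
  apply: (le_trans (le_measure _ _ _ cover)); rewrite ?inE //; first exact: measurableU.
  apply: (le_trans (measureU2 _ mcheb mU)).
  by rewrite leeD2l // Boole_inequality.
have E2 : (P2 cheb <= (t ^- 2 * v)%:E)%E by rewrite EFinM -hv; exact: chebyshev.
have E3 : (\sum_(j < N) P2 (atom j) <= (2 * δ *+ N)%:E)%E.
  apply: (@le_trans _ _ (\sum_(j < N) (2 * δ)%:E)).
    apply: lee_sum => j _.
    have f : P2 (atom j) \is a fin_num by rewrite fin_num_measure.
    rewrite -(fineK f) lee_fin; exact: atom_le.
  by rewrite sumEFin sumr_const card_ord.
have := le_trans E1 (leeD E2 E3); rewrite -EFinD lee_fin => H.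
have st : 2 * σ <= t.
  have : a * (2 * σ) <= a * t by nra.
  by rewrite ler_pM2l.
have q : t ^- 2 * v <= 1 / 4.
  rewrite mulrC ler_pdivrMr ?exprn_gt0 //.
  rewrite -σ2; nra.
rewrite -mulr_natr in H.
have δN : 3 / 4 <= 2 * δ * N%:R by lra.
have aσ : 0 <= a * σ by apply: mulr_ge0 => //; exact: ltW.
have δaσ := mulr_ge0 δ0 aσ.
rewrite ler_pdivrMr; last by nra.
nra.
Qed.
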